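(* Let $K$ be a compact set in a metric space, let $\delta>0$ and $C>1$. Then there exists a $(\delta,C)$-discretization of $K$.
   Context: For a compact metric space $K$, $\delta>0$ and $C>1$, a $(\delta,C)$-discretization of $K$ is a finite set of points $\{x_1,\dots,x_n\}\subset K$ such that for all $x,y\in K$, $|\{i: x_i\in B(x,\delta/2)\}|< C\,|\{i: x_i\in B(y,\delta)\}|$, where $B(p,r)$ denotes the open ball of radius $r$ centered at $p$. *)

(* Defs.v *)
From HB Require Import structures.
From mathcomp Require Import all_boot all_order all_algebra.
From mathcomp Require Import all_classical all_reals all_analysis.
Set Implicit Arguments. Unset Strict Implicit. Unset Printing Implicit Defensive.
Import Order.TTheory GRing.Theory Num.Theory.
Local Open Scope classical_set_scope.
Local Open Scope ring_scope.

Definition nb_in_ball {R : realType} {M : metricType R} (s : seq M) (x : M) (r : R) : nat :=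
  count (fun p => `[< ball x r p >]) s.

(* (delta, C)-discretization of K: a finite set of (distinct) points of K,
   given as a duplicate-free list, such that for all x, y in K,
   #{i : x_i in B(x, delta/2)} < C * #{i : x_i in B(y, delta)}. *)
Definition discretization {R : realType} {M : metricType R} (K : set M)
    (delta C : R) (s : seq M) : Prop :=
  uniq s /\ (forall p, p \in s -> K p) /\
  (forall x y, K x -> K y ->
     (nb_in_ball s x (delta / 2))%:R < C * (nb_in_ball s y delta)%:R).

(* Main.v *)
Require Import Defs.
From HB Require Import structures.
From mathcomp Require Import all_boot all_order all_algebra.
From mathcomp Require Import all_classical all_reals all_analysis.
Import Order.TTheory GRing.Theory Num.Theory.
Local Open Scope classical_set_scope.
Local Open Scope ring_scope.

Section Aux.
Variables (R : realType) (M : metricType R).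

Lemma cover_fin (K : set M) (r : R) : compact K -> 0 < r ->
  exists S : seq M, forall x, K x -> exists2 c, c \in S & ball c r x.
Proof.
move=> cK r0; apply: contrapT => nS.
have hS : forall S : seq M, exists x, K x /\ forall c, c \in S -> ~ ball c r x.
  move=> S; apply: contrapT => nx; apply: nS; exists S => x Kx.
  apply: contrapT => nc; apply: nx; exists x; split => // c cS bc.
  by apply: nc; exists c.
pose G (S : seq M) := [set x | K x /\ forall c, c \in S -> ~ ball c r x].
have FF : Filter (filter_from [set: seq M] G).
  apply: filter_from_filter; first by exists [::].
  move=> i j _ _; exists (i ++ j) => // x [Kx H]; split; split => // c cS;
    by apply: H; rewrite mem_cat cS ?orbT.
have PF : ProperFilter (filter_from [set: seq M] G).
  apply: filter_from_proper => S _; have [x [Kx H]] := hS S; by exists x.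
have FK : filter_from [set: seq M] G K by exists [::] => // x [].
have [p [Kp clp]] := cK _ PF FK.
have [x [[_ H] bx]] := clp (G [:: p]) (ball p r) (ex_intro2 _ _ [:: p] I (fun _ h => h)) (nbhsx_ballx p r r0).
by apply: (H p); rewrite ?mem_head.
Qed.

Definition sep (d : R) (s : seq M) :=
  uniq s /\ forall p q, p \in s -> q \in s -> p != q -> ~ ball p d q.

Lemma sep_bound (d : R) (s T : seq M) : sep d s ->
  (forall p, p \in s -> exists2 c, c \in T & ball c (d / 2) p) ->
  (size s <= size T)%N.
Proof.
elim: s T => [//|p s IH] T [/= /andP [ps us] Hs] HT.
have [c cT bcp] := HT p (mem_head _ _).
have sT : (0 < size T)%N by move: cT; case: (T).
have -> : size T = (size (rem c T)).+1 by rewrite size_rem // prednK.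
rewrite ltnS; apply: IH.
  split => // a b aS bS; apply: Hs; by rewrite in_cons ?aS ?bS orbT.
move=> q qS; have qps : q \in p :: s by rewrite in_cons qS orbT.
have [c' c'T bc'q] := HT q qps.
exists c' => //.
have [ec|nec] := eqVneq c' c.
  exfalso; subst c'.
  have pq : p != q by apply: contraNneq ps => ->.
  apply: (Hs p q (mem_head _ _) qps pq).
  have := ball_triangle (ball_sym bcp) bc'q.
  by rewrite -splitr.
exact: rem_mem.
Qed.

Lemma count_le1 (a : pred M) (s : seq M) : uniq s ->
  (forall p q, p \in s -> q \in s -> a p -> a q -> p = q) -> (count a s <= 1)%N.
Proof.
elim: s => [//|p s IH] /= /andP [ps us] H.
case ap: (a p) => /=.
  rewrite add1n ltnS leqn0 eqn0Ngt -has_count; apply/hasP => -[q qs aq].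
  have qps : q \in p :: s by rewrite in_cons qs orbT.
  have pq := H p q (mem_head _ _) qps ap aq.
  by move: ps; rewrite pq qs.
rewrite add0n; apply: IH => // p' q' p's q's; apply: H; by rewrite in_cons ?p's ?q's orbT.
Qed.
End Aux.

Theorem lemma1 (R : realType) (M : metricType R) (K : set M) (delta C : R) :
  compact K -> 0 < delta -> 1 < C ->
  exists s : seq M, discretization K delta C s.
Proof.
move=> cK d0 C1.
have d20 : 0 < delta / 2 by rewrite divr_gt0.
have [T HT] := @cover_fin R M K (delta / 2) cK d20.
apply: contrapT => nD.
have ext : forall s, @sep R M delta s -> (forall p, p \in s -> K p) ->
    exists y, K y /\ forall p, p \in s -> ~ ball p delta y.
  move=> s ss sK; apply: contrapT => ny; apply: nD; exists s.
  split; first by case: ss.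
  split => // x y Kx Ky.
  have c1 : (nb_in_ball s x (delta / 2) <= 1)%N.
    apply: count_le1; first by case: ss.
    move=> p q ps qs /asboolP bp /asboolP bq; apply: contrapT => /eqP pq.
    apply: (ss.2 p q ps qs pq).
    have := ball_triangle (ball_sym bp) bq; by rewrite -splitr.
  have c2 : (0 < nb_in_ball s y delta)%N.
    have [p ps bpy] : exists2 p, p \in s & ball p delta y.
      apply: contrapT => np; apply: ny; exists y; split => // p ps bp.
      by apply: np; exists p.
    rewrite /nb_in_ball -has_count; apply/hasP; exists p => //.
    by apply/asboolP; exact: ball_sym.
  apply: (@le_lt_trans _ _ 1).
    by rewrite -[1]/(1%:R) ler_nat.
  apply: (lt_le_trans C1).
  rewrite -{1}[C]mulr1 ler_wpM2l // ?ler1n //.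
  exact: ltW (lt_trans ltr01 C1).
have build : forall n : nat, exists s, @sep R M delta s /\ (forall p, p \in s -> K p) /\ size s = n.
  elim => [|n [s [ss [sK sz]]]].
    by exists [::]; split; [split | split].
  have [y [Ky ny]] := ext s ss sK.
  exists (y :: s); split; [|split].
  - split.
      rewrite /= ss.1 andbT; apply/negP => ys; exact: (ny y ys (ballxx y d0)).
    move=> p q; rewrite !in_cons => /orP[/eqP->|ps] /orP[/eqP->|qs].
    + by rewrite eqxx.
    + by move=> _ b; apply: (ny q qs); exact: ball_sym.
    + by move=> _; apply: ny.
    + exact: ss.2.
  - by move=> p; rewrite in_cons => /orP[/eqP->|]; [|apply: sK].
  - by rewrite /= sz.
have [s [ss [sK sz]]] := build (size T).+1.
have := @sep_bound R M delta s T ss (fun p ps => HT p (sK p ps)).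
by rewrite sz ltnn.
Qed.
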